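(* Let $\mathcal{F}$ be a saturated fusion system on a $p$-group $S$ of nilpotency class two, and let $E$ be an essential subgroup of $\mathcal{F}$. Then $E\trianglelefteq S$, $[O^{p'}(\mathrm{Aut}_{\mathcal{F}}(E)),E]\le Z(E)$, and $E=C_S(Z(E))$.
   Context: $E\le S$ is essential in $\mathcal{F}$ if $E$ is $\mathcal{F}$-centric ($C_S(E\varphi)\le E\varphi$ for all $\varphi\in\mathrm{Hom}_{\mathcal{F}}(E,S)$), fully normalized, and $\mathrm{Out}_{\mathcal{F}}(E)=\mathrm{Aut}_{\mathcal{F}}(E)/\mathrm{Inn}(E)$ has a strongly $p$-embedded subgroup. *)

(* Defs.v *)
From mathcomp Require Import all_boot all_fingroup all_solvable.
Set Implicit Arguments. Unset Strict Implicit. Unset Printing Implicit Defensive.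
Import GroupScope.
Local Open Scope group_scope.

(* A (candidate) fusion system is a predicate  F P Q f  meaning
   "f restricted to P is a morphism in Hom_F(P,Q)".  Objects are subsets of
   gT that are subgroups of S; morphisms are functions gT -> gT, only their
   restriction to P matters. *)
Section Fusion.
Variable gT : finGroupType.
Implicit Types (S P Q R : {set gT}) (f g : gT -> gT).

Definition fus_pred := {set gT} -> {set gT} -> (gT -> gT) -> bool.

Definition is_inj_hom P Q f :=
  [/\ {in P &, {morph f : x y / x * y}}, {in P &, injective f} & f @: P \subset Q].

Record fusion_system (S : {group gT}) (F : fus_pred) : Prop := FusionSystem {
  fus_obj : forall P Q f, F P Q f ->
    [/\ group_set P, group_set Q, P \subset S & Q \subset S];
  fus_hom : forall P Q f, F P Q f -> is_inj_hom P Q f;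
  fus_ext : forall P Q f g, F P Q f -> {in P, f =1 g} -> F P Q g;
  fus_conj : forall P Q s, group_set P -> group_set Q -> P \subset S ->
    Q \subset S -> s \in S -> P :^ s \subset Q -> F P Q (conjg^~ s);
  fus_comp : forall P Q R f g, F P Q f -> F Q R g -> F P R (g \o f);
  fus_restr : forall P Q P' Q' f, F P Q f -> group_set P' -> P' \subset P ->
    group_set Q' -> Q' \subset S -> f @: P' \subset Q' -> F P' Q' f;
  fus_inv : forall P Q f, F P Q f ->
    exists g, F (f @: P) P g /\ {in P, cancel f g}
}.

Variables (S : {group gT}) (F : fus_pred).

Definition AutF P : {set {perm gT}} := [set a in Aut P | F P P a].

Definition AutS P : {set {perm gT}} :=
  [set a in Aut P | [exists s in 'N_S(P), [forall x in P, a x == x ^ s]]].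

Definition Inn P : {set {perm gT}} :=
  [set a in Aut P | [exists s in P, [forall x in P, a x == x ^ s]]].

Definition OutF P := (<<AutF P>> / <<Inn P>>%G)%g.

Definition F_conjugate P Q := exists f, F P Q f /\ f @: P = Q.

Definition fully_automized (p : nat) P := p.-Sylow(AutF P) (AutS P).

(* N_f = { g in N_S(Q) | f c_g f^{-1} in Aut_S(P) } *)
Definition N_ext P Q f : {set gT} :=
  [set s in 'N_S(Q) |
     [exists a in AutS P, [forall x in Q, f (x ^ s) == a (f x)]]].

Definition receptive P := forall Q f, F Q P f -> f @: Q = P ->
  exists fb, F (N_ext P Q f) S fb /\ {in Q, fb =1 f}.

(* saturation (Aschbacher--Kessar--Oliver, Def. I.2.2) *)
Definition saturated (p : nat) :=
  forall P : {group gT}, P \subset S ->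
    exists Q : {group gT}, [/\ F_conjugate P Q, fully_automized p Q & receptive Q].

Definition F_centric P :=
  forall f, F P S f -> 'C_S(f @: P) \subset f @: P.

Definition fully_normalized P :=
  forall f, F P S f -> #|'N_S(f @: P)| <= #|'N_S(P)|.

End Fusion.

Definition strongly_p_embedded (T : finGroupType) (p : nat) (G H : {set T}) :=
  [/\ H \proper G, p %| #|H| &
      forall x, x \in G :\: H -> p^'.-group (H :&: H :^ x)].

Definition essential (gT : finGroupType) (p : nat) (S : {group gT})
    (F : fus_pred gT) (E : {group gT}) :=
  [/\ E \subset S, F_centric S F E, fully_normalized S F E &
      exists H : {group _}, strongly_p_embedded p (OutF F E) H].

Definition Opp_res (T : finGroupType) (p : nat) (G : {group T}) : {set T} :=
  \bigcap_(N : {group T} | (N <| G) && p^'.-group (G / N)) N.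

Definition comm_aut (gT : finGroupType) (A : {set {perm gT}}) (E : {set gT})
  : {set gT} := <<[set x^-1 * (a : {perm gT}) x | x in E, a in A]>>.

(* Main.v *)
Require Import Defs.
From mathcomp Require Import all_boot all_fingroup all_solvable.
Import GroupScope.
Set Implicit Arguments. Unset Strict Implicit. Unset Printing Implicit Defensive.


Section Help.
Variables (gT : finGroupType) (S : {group gT}) (F : fus_pred gT).
Hypothesis FS : fusion_system S F.

Lemma fus_id (P : {group gT}) : P \subset S -> F P S id.
Proof.
move=> sPS.
have h := fus_conj FS (groupP P) (groupP S) sPS (subxx S) (group1 S).
rewrite conjsg1 in h; apply: (fus_ext FS (h sPS)) => x _.
by rewrite conjg1.
Qed.

Lemma fus_idP (P : {group gT}) : P \subset S -> F P P id.
Proof.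
move=> sPS; apply: (fus_restr FS (fus_id sPS)) => //; try exact: groupP.
by rewrite imset_id.
Qed.

Lemma centric_sub (P : {group gT}) : P \subset S -> F_centric S F P ->
  'C_S(P) \subset P.
Proof. by move=> sPS /(_ id (fus_id sPS)); rewrite imset_id. Qed.

Lemma AutF_group (P : {group gT}) : P \subset S -> group_set (AutF F P).
Proof.
move=> sPS; apply/group_setP; split.
  apply/setIdP; split; first exact: (group1 [group of Aut P]).
  apply: (fus_ext FS (fus_idP sPS)) => x _.
  by rewrite perm1.
move=> a b /setIdP[Aa Fa] /setIdP[Ab Fb].
apply/setIdP; split; first exact: (groupM (G:=[group of Aut P])).
apply: (fus_ext FS (fus_comp FS Fa Fb)) => x _.
by rewrite permM.
Qed.

Lemma AutF_sub (P : {set gT}) : AutF F P \subset Aut P.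
Proof. by apply/subsetP=> a; rewrite inE => /andP[]. Qed.

End Help.


Lemma spe_Op (T : finGroupType) p (G H P : {group T}) : prime p ->
  strongly_p_embedded p G H -> P <| G -> p.-group P -> P :=: 1.
Proof.
move=> pr [prHG pH spe] nPG pP.
have sHG := proper_sub prHG.
have key (U : {group T}) x : x \in G -> x \notin H -> p.-group U -> U \subset H :&: H :^ x ->
    #|U| = 1%N.
  move=> Gx nHx pU sU.
  have := spe x; rewrite inE nHx Gx => /(_ isT) p'I.
  exact: pnat_1 pU (pgroupS sU p'I).
have [Tg sylT] := Sylow_exists p H.
have [sTH pTg _] := and3P sylT.
have ntT : #|Tg| != 1%N.
  rewrite (card_Hall sylT); apply/eqP => h.
  have := p_part_gt1 p #|H|; rewrite h ltnn mem_primes pr cardG_gt0 pH.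
  by [].
have sPH : P \subset H.
  have nPT : Tg \subset 'N(P) := subset_trans (subset_trans sTH sHG) (normal_norm nPG).
  pose PT := (P <*> Tg)%G.
  have ePT : PT :=: P * Tg by rewrite /= norm_joinEr.
  have pPT : p.-group PT by rewrite ePT pgroupM pP.
  have sPTG : PT \subset G.
    by rewrite join_subG (normal_sub nPG) (subset_trans sTH sHG).
  have sTPT : Tg \subset PT by rewrite /= joing_subr.
  have eI : PT :&: H :=: Tg.
    apply: (sub_pHall sylT); rewrite ?subsetIr //.
      exact: pgroupS (subsetIl _ _) pPT.
    by rewrite subsetI sTPT.
  case: (eqVproper sTPT) => [eT|prT].
    by rewrite (subset_trans (joing_subl P Tg)) // -eT.
  have /properP[_ [x Nx nTx]] := nilpotent_proper_norm (pgroup_nil pPT) prT.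
  have [PTx NTx] : x \in PT /\ x \in 'N(Tg) by move: Nx; rewrite inE => /andP[].
  have nHx : x \notin H.
    by apply: contra nTx => Hx; rewrite -eI inE PTx.
  have sTI : Tg \subset H :&: H :^ x.
    by rewrite subsetI sTH -(normP NTx) conjSg sTH.
  by rewrite (key Tg x (subsetP sPTG x PTx) nHx pTg sTI) in ntT.
have /properP[_ [x Gx nHx]] := prHG.
apply/card1_trivg; apply: (key P x Gx nHx pP).
by rewrite subsetI sPH -(normP (subsetP (normal_norm nPG) x Gx)) conjSg sPH.
Qed.


Section Nz.
Variables (gT : finGroupType) (P : {group gT}) (A : {group {perm gT}}).
Hypothesis sAAut : A \subset Aut P.

Definition Nz := [set a in A | [forall x in P, x^-1 * a x \in 'Z(P)]].
Definition Kz := [set a in Nz | [forall z in 'Z(P), a z == z]].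

Lemma autZ a z : a \in Aut P -> z \in 'Z(P) -> a z \in 'Z(P).
Proof.
move=> Aa Zz; have /andP[_ /forall_inP h] := center_char P.
by apply: (subsetP (h a Aa)); apply: imset_f.
Qed.

Lemma autM a x y : a \in Aut P -> x \in P -> y \in P -> a (x * y) = a x * a y.
Proof. by move=> Aa Px Py; rewrite (morphicP (Aut_morphic Aa)). Qed.

Lemma autP a x : a \in Aut P -> x \in P -> a x \in P.
Proof. by move=> Aa Px; rewrite Aut_closed. Qed.

Lemma NzP a : a \in Nz -> a \in A /\ forall x, x \in P -> x^-1 * a x \in 'Z(P).
Proof. by rewrite inE => /andP[Aa /forall_inP h]. Qed.

Lemma Nz_group : group_set Nz.
Proof.
apply/group_setP; split.
  rewrite inE group1; apply/forall_inP => x Px; by rewrite perm1 mulVg group1.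
move=> a b /NzP[Aa ha] /NzP[Ab hb]; rewrite inE groupM //.
apply/forall_inP => x Px.
have AAa := subsetP sAAut a Aa; have AAb := subsetP sAAut b Ab.
have Zz := ha x Px; have Pz := subsetP (center_sub P) _ Zz.
rewrite permM -{1}(mulKVg x (a x)) autM // mulgA.
rewrite -{1}(mulKVg x (b x)) mulgA mulVg mul1g.
by rewrite groupM // ?hb // autZ.
Qed.

Lemma Nz_conj a b : a \in Nz -> b \in A -> a ^ b \in Nz.
Proof.
move=> /NzP[Aa ha] Ab; rewrite inE groupJ //.
apply/forall_inP => x Px.
have AAa := subsetP sAAut a Aa; have AAb := subsetP sAAut b Ab.
have AAb' : b^-1 \in Aut P by rewrite groupV.
set y := b^-1 x.
have Py : y \in P by rewrite /y autP.
have Zz := ha y Py; have Pz := subsetP (center_sub P) _ Zz.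
rewrite conjgE !permM -/y -(mulKVg y (a y)) autM //.
by rewrite /y permKV mulKg autZ.
Qed.

Lemma Nz_normal : Nz <| A.
Proof.
apply/andP; split; first by apply/subsetP => a /NzP[].
apply/normsP => b Ab; apply/eqP; rewrite eqEcard cardJg leqnn andbT.
apply/subsetP => c; rewrite mem_conjg => Nc.
by rewrite -(conjgKV b c) Nz_conj.
Qed.

Lemma KzP a : a \in Kz ->
  [/\ a \in A, forall x, x \in P -> x^-1 * a x \in 'Z(P) &
      forall z, z \in 'Z(P) -> a z = z].
Proof.
rewrite inE => /andP[/NzP[Aa ha] /forall_inP h]; split=> // z Zz.
exact/eqP/h.
Qed.

Lemma Kz_group : group_set Kz.
Proof.
apply/group_setP; split.
  apply/setIdP; split; first exact: (group1 (Group Nz_group)).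
  apply/forall_inP => z _.
  by rewrite perm1.
move=> a b /setIdP[Na /forall_inP ha] /setIdP[Nb /forall_inP hb].
apply/setIdP; split; first exact: (groupM (G := Group Nz_group)).
apply/forall_inP => z Zz.
by rewrite permM (eqP (ha z Zz)) hb.
Qed.

Lemma Kz_conj a b : a \in Kz -> b \in A -> a ^ b \in Kz.
Proof.
move=> Ka Ab; have [Aa _ fa] := KzP Ka.
apply/setIdP; split; first by apply: Nz_conj => //; move: Ka => /setIdP[].
apply/forall_inP => z Zz.
have AAb := subsetP sAAut b Ab.
have AAb' : b^-1 \in Aut P by rewrite groupV.
by rewrite conjgE !permM fa ?autZ // permKV.
Qed.

Lemma Kz_normal : Kz <| A.
Proof.
apply/andP; split; first by apply/subsetP => a /KzP[].
apply/normsP => b Ab; apply/eqP; rewrite eqEcard cardJg leqnn andbT.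
apply/subsetP => c; rewrite mem_conjg => Nc.
by rewrite -(conjgKV b c) Kz_conj.
Qed.

Lemma Kz_exp a n x : a \in Kz -> x \in P ->
  (a ^+ n) x = x * (x^-1 * a x) ^+ n.
Proof.
move=> Ka; have [Aa ha fa] := KzP Ka; have AAa := subsetP sAAut a Aa.
elim: n x => [|n IH] x Px; first by rewrite !expg0 perm1 mulg1.
have Zz := ha x Px; have Pz := subsetP (center_sub P) _ Zz.
have AAn : a ^+ n \in Aut P by rewrite groupX.
set z := x^-1 * a x in Zz Pz *.
have ax : a x = x * z by rewrite /z mulKVg.
rewrite expgS permM ax autM // IH // (IH z Pz) (fa z Zz) -/z.
rewrite mulVg expg1n mulg1 expgSr. exact: (esym (mulgA _ _ _)).
Qed.

Lemma Kz_pgroup p : prime p -> p.-group P -> p.-group Kz.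
Proof.
move=> pr pP; change (p.-group (Group Kz_group)); apply/pgroupP => q qpr qdv.
have [a Ka oa] := Cauchy qpr qdv.
have [Aa ha fa] := KzP Ka; have AAa := subsetP sAAut a Aa.
have e1 : a ^+ #|'Z(P)| = 1.
  have AX : a ^+ #|'Z(P)| \in Aut P by rewrite groupX.
  apply: (eq_Aut AX (group1 [group of Aut P])) => x Px.
  by rewrite Kz_exp // expg_cardG ?ha // mulg1 perm1.
have : q %| #|'Z(P)| by rewrite -oa order_dvdn e1.
move=> /pnat_dvd /(_ (pgroupS (center_sub P) pP)).
by rewrite pnatE.
Qed.

End Nz.


Section InnS.
Variables (gT : finGroupType) (E : {group gT}).

Lemma InnP a : a \in Inn E ->
  a \in Aut E /\ exists2 e, e \in E & forall x, x \in E -> a x = x ^ e.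
Proof.
rewrite inE => /andP[Aa /existsP[e /andP[Ee /forall_inP h]]].
by split=> //; exists e => // x Ex; apply/eqP/h.
Qed.

Lemma Inn_group : group_set (Inn E).
Proof.
apply/group_setP; split.
  rewrite inE group1; apply/existsP; exists 1; rewrite group1 /=.
  by apply/forall_inP => x _; rewrite perm1 conjg1.
move=> a b /InnP[Aa [e Ee he]] /InnP[Ab [f Ef hf]].
rewrite inE (groupM (G := [group of Aut E])) //.
apply/existsP; exists (e * f); rewrite groupM //=.
apply/forall_inP => x Ex; rewrite permM he // hf ?memJ_norm ?conjgM //.
by rewrite (subsetP (normG E)).
Qed.

Lemma Inn_conj a b : a \in Inn E -> b \in Aut E -> a ^ b \in Inn E.
Proof.
move=> /InnP[Aa [e Ee he]] Ab.
rewrite inE (groupJ (G := [group of Aut E])) //.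
apply/existsP; exists (b e); rewrite Aut_closed //=.
apply/forall_inP => x Ex.
have Ab' : b^-1 \in Aut E by rewrite (groupV [group of Aut E]).
pose m := morphm (Aut_morphic Ab).
have Ey : b^-1 x \in E by rewrite Aut_closed.
rewrite conjgE !permM he // -(morphmE (Aut_morphic Ab)) morphJ //.
by rewrite /= !morphmE permKV.
Qed.

Lemma Aut_norm_Inn : Aut E \subset 'N(<<Inn E>>).
Proof.
apply: subset_trans (norm_gen _); apply/normsP => b Ab; apply/eqP.
rewrite eqEcard cardJg leqnn andbT.
apply/subsetP => c; rewrite mem_conjg => Nc.
have Ab' : b^-1 \in Aut E by rewrite (groupV [group of Aut E]).
by rewrite -(conjgKV b c) Inn_conj.
Qed.

End InnS.

Lemma commZ (gT : finGroupType) (P S : {group gT}) x s :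
  S^`(1) \subset 'Z(S) -> P \subset S -> x \in P -> s \in S -> x ^ s \in P ->
  x^-1 * x ^ s \in 'Z(P).
Proof.
move=> dZ sPS Px Ss Pxs.
have Zc : [~ x, s] \in 'Z(S) by apply: (subsetP dZ); apply: mem_commg => //; apply: (subsetP sPS).
rewrite -commgEl; apply/centerP; split; first by rewrite commgEl groupM ?groupV.
move=> y Py; have /centerP[_ h] := Zc; exact: h (subsetP sPS y Py).
Qed.

Lemma AutSP (gT : finGroupType) (S Q : {group gT}) a : a \in AutS S Q ->
  a \in Aut Q /\ exists2 s, s \in 'N_S(Q) & forall x, x \in Q -> a x = x ^ s.
Proof.
rewrite inE => /andP[Aa /existsP[e /andP[Ee /forall_inP h]]].
by split=> //; exists e => // x Ex; apply/eqP/h.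
Qed.

Lemma AutS_group (gT : finGroupType) (S Q : {group gT}) : group_set (AutS S Q).
Proof.
apply/group_setP; split.
  rewrite inE group1; apply/existsP; exists 1; rewrite group1 /=.
  by apply/forall_inP => x _; rewrite perm1 conjg1.
move=> a b /AutSP[Aa [e Ee he]] /AutSP[Ab [f Ef hf]].
rewrite inE (groupM (G := [group of Aut Q])) //.
apply/existsP; exists (e * f); rewrite groupM //=.
apply/forall_inP => x Ex; rewrite permM he // hf ?memJ_norm ?conjgM //.
by move: Ee; rewrite inE => /andP[].
Qed.

Unset Implicit Arguments. Set Strict Implicit.

Theorem mainTheorem18 (gT : finGroupType) (p : nat) (S : {group gT})
    (F : fus_pred gT) (E : {group gT}) :
  prime p -> p.-group S -> nil_class S = 2 ->
  fusion_system S F -> saturated S F p ->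
  essential p S F E ->
  [/\ E <| S,
      comm_aut (Opp_res p [group of <<AutF F E>>]) E \subset 'Z(E) &
      E :=: 'C_S('Z(E))].
Proof.
move=> pr pS nc2 FS sat [sES cenE fnE [H speH]].
have dZ : S^`(1) \subset 'Z(S) by rewrite -nil_class2 nc2.
have cSE := centric_sub FS sES cenE.
have nES : E <| S.
  apply: (sub_der1_normal _ sES); apply: (subset_trans dZ).
  apply: (subset_trans _ cSE).
  by rewrite subsetI subsetIl (subset_trans (subsetIr _ _) (centS sES)).
pose AG := <<AutF F E>>%G.
have eAG : <<AutF F E>> = AutF F E := gen_set_id (AutF_group FS sES).
have sAG : AG \subset Aut E by rewrite /= eAG AutF_sub.
have part3 : 'C_S('Z(E)) \subset E.
  apply/subsetP => s /setIP[Ss cZs].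
  have Ns : s \in 'N(E) := subsetP (normal_norm nES) s Ss.
  pose c := conj_aut E s.
  have Ac : c \in Aut E := Aut_aut _ _.
  have cE : {in E, c =1 conjg^~ s} := fun x Ex => norm_conj_autE Ns Ex.
  have Fc : F E E c.
    have h := fus_conj FS (groupP E) (groupP E) sES sES Ss.
    rewrite (normP Ns) in h.
    apply: (fus_ext FS (h (subxx E))) => x Ex; by rewrite cE.
  have Kc : c \in Kz E AG.
    apply/setIdP; split.
      apply/setIdP; split; first by rewrite /= eAG; apply/setIdP.
      apply/forall_inP => x Ex; rewrite cE //; apply: (commZ dZ sES Ex Ss).
      by rewrite memJ_norm.
    apply/forall_inP => z Zz; rewrite cE ?(subsetP (center_sub E)) //.
    apply/eqP/conjg_fixP/commgP; exact: esym (centP cZs z Zz).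
  have nKG : Kz E AG <| AG := Kz_normal sAG.
  pose KG := Group (Kz_group sAG).
  pose IG := <<Inn E>>%G.
  have nAI : AG \subset 'N(IG) := subset_trans sAG (Aut_norm_Inn E).
  have nKI : KG \subset 'N(IG) := subset_trans (normal_sub nKG) nAI.
  have triv : (KG / IG)%G :=: 1.
    apply: (spe_Op (G := (AG / IG)%G) (H := H) pr).
    - exact: speH.
    - exact: quotient_normal.
    - apply: quotient_pgroup; exact: Kz_pgroup pr (pgroupS sES pS).
  have : KG \subset IG by rewrite -quotient_sub1 // triv.
  move/subsetP/(_ c Kc); rewrite /= gen_set_id ?Inn_group // => /InnP[_ [e Ee he]].
  have sei : s * e^-1 \in 'C_S(E).
    rewrite inE groupM ?groupV ?(subsetP sES e Ee) //=.
    apply/centP => x Ex.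
    apply/esym/commgP/conjg_fixP; by rewrite conjgM -cE // he // conjgK.
  by rewrite -(mulgVK e s) groupM // (subsetP cSE _ sei).
split => //; last first.
  apply/eqP; rewrite eqEsubset part3 andbT subsetI sES centsC.
  exact: subsetIr.
have [Q [[f [fF fQ]] fa _]] := sat E sES.
have [_ _ _ sQS] := fus_obj FS fF.
have [fM finj _] := fus_hom FS fF.
have [g [gF gK]] := fus_inv FS fF.
rewrite fQ in gF.
have [gM ginj gsub] := fus_hom FS gF.
have fM' : morphic E f by apply/morphicP.
pose m := morphm_morphism fM'.
have injm : 'injm m by apply/injmP => x y Ex Ey; exact: finj.
have imm : m @* E = Q by rewrite morphimEdom.
pose phi := Aut_isom injm (subxx E).
pose AQ := Group (AutF_group FS sQS).
have sAQ : AQ \subset Aut Q by exact: AutF_sub.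
have phiF : forall a, a \in AutF F E -> phi a \in AutF F Q.
  move=> a /setIdP[Aa Fa]; apply/setIdP; split.
    by rewrite -imm; apply: Aut_Aut_isom.
  have h := fus_comp FS (fus_comp FS gF Fa) fF.
  apply: (fus_ext FS h) => y; rewrite -fQ => /imsetP[x Ex ->] /=.
  rewrite gK //.
  by have := Aut_isomE injm (subxx E) Aa Ex; rewrite /= !morphmE => ->.
have [T sylT] := Sylow_exists p AG.
have sTA := pHall_sub sylT.
have pT := pHall_pgroup sylT.
have pphiT : p.-group (phi @* T) := morphim_pgroup _ pT.
have sphiT : phi @* T \subset AQ.
  apply/subsetP => _ /morphimP[a _ Ta ->]; apply: phiF.
  by rewrite -eAG; exact: (subsetP sTA a Ta).
pose ASQ := Group (AutS_group S Q).
have fa' : p.-Sylow(AQ) ASQ := fa.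
have [chi AQchi schi] := Sylow_subJ fa' sphiT pphiT.
have sASN : ASQ \subset Nz Q AQ.
  apply/subsetP => a Sa; apply/setIdP; split; first exact: (subsetP (pHall_sub fa')).
  have /AutSP[Aa [s Ns hs]] := Sa.
  have [Ss NQs] : s \in S /\ s \in 'N(Q) by move: Ns; rewrite inE => /andP[].
  apply/forall_inP => x Qx; rewrite hs //; apply: (commZ dZ sQS Qx Ss).
  by rewrite memJ_norm.
have sphiN : phi @* T \subset Nz Q AQ.
  apply: (subset_trans schi).
  rewrite -(normP (subsetP (normal_norm (Nz_normal sAQ)) chi AQchi)) conjSg.
  exact: sASN.
have sTN : T \subset Nz E AG.
  apply/subsetP => t Tt.
  have At : t \in Aut E := subsetP sAG t (subsetP sTA t Tt).
  have := subsetP sphiN (phi t) (mem_morphim phi At Tt).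
  move/NzP => [_ hq].
  apply/setIdP; split; first exact: (subsetP sTA t Tt).
  apply/forall_inP => x Ex.
  have fx : f x \in Q by rewrite -fQ imset_f.
  have ftx : f (t x) \in Q by rewrite -fQ imset_f // Aut_closed.
  have mxQ : m x \in Q by rewrite -imm mem_morphim.
  have := hq (m x) mxQ.
  rewrite (Aut_isomE injm (subxx E) At Ex) /=.
  set z := (f x)^-1 * f (t x) => Zz.
  have Qz : z \in Q := subsetP (center_sub Q) z Zz.
  have tx : t x = x * g z.
    have e1 : f (t x) = f x * z by rewrite /z mulKVg.
    by rewrite -(gK (t x)) ?Aut_closed // e1 gM // gK.
  rewrite tx mulKg; apply/centerP; split.
    by apply: (subsetP gsub); rewrite imset_f.
  move=> y Ey; have fy : f y \in Q by rewrite -fQ imset_f.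
  have /centerP[_ cz] := Zz.
  rewrite /commute -(gK y Ey) -!gM //.
  by rewrite (cz _ fy).
have Opp_sub : Opp_res p [group of <<AutF F E>>] \subset Nz E AG.
  apply: (bigcap_inf (Group (Nz_group sAG))) => /=.
  have nNA := Nz_normal sAG.
  rewrite nNA /= /pgroup (@card_quotient _ (Group (Nz_group sAG)) AG (normal_norm nNA)).
  have := @Lagrange_index _ AG (Group (Nz_group sAG)) T (normal_sub nNA) sTN.
  move=> eL; have [_ _ p'T] := and3P sylT.
  apply: (pnat_dvd _ p'T); rewrite -eL; exact: dvdn_mulr.
rewrite /comm_aut gen_subG; apply/subsetP => _ /imset2P[x a Ex Oa ->].
have /NzP[_ h] := subsetP Opp_sub a Oa.
exact: h x Ex.
Qed.
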